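(* Let $f$ be a rational function with real coefficients such that $\int_{-\infty}^{\infty}f(x)\,dx$ is finite (absolutely convergent). Then $$\int_{-\infty}^{\infty}f(x)\,dx=\int_{-\infty}^{\infty}\Big[f\big(y+\sqrt{y^{2}+1}\big)+f\big(y-\sqrt{y^{2}+1}\big)\Big]dy+\int_{-\infty}^{\infty}\Big[f\big(y+\sqrt{y^{2}+1}\big)-f\big(y-\sqrt{y^{2}+1}\big)\Big]\frac{y\,dy}{\sqrt{y^{2}+1}}.$$ Moreover, if $f$ is even, the identity remains valid when every interval of integration $(-\infty,\infty)$ is replaced by $(0,\infty)$. *)

(* Defs.v *)
From Stdlib Require Import Reals Lra List.
Open Scope R_scope.

(* Evaluation of a real polynomial given by its coefficient list
   [a0; a1; ...; an] (a0 + a1 x + ... + an x^n), by Horner's scheme. *)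
Definition peval (p : list R) (x : R) : R :=
  fold_right (fun a acc => a + x * acc) 0 p.

Definition nonzero_poly (q : list R) : Prop := exists c, In c q /\ c <> 0.

(* f is a rational function with real coefficients: f = P/Q with Q <> 0,
   f being equal to P(x)/Q(x) wherever Q(x) <> 0 (values at the finitely
   many real zeros of Q are irrelevant). *)
Definition is_rational_fun (f : R -> R) : Prop :=
  exists p q : list R, nonzero_poly q /\
    forall x, peval q x <> 0 -> f x = peval p x / peval q x.

Definition improper_int_R (f : R -> R) (l : R) : Prop :=
  (forall a b, inhabited (Riemann_integrable f a b)) /\
  forall eps, eps > 0 -> exists M, forall a b (pr : Riemann_integrable f a b),
    a <= - M -> M <= b -> Rabs (RiemannInt pr - l) < eps.

Definition improper_int_pos (f : R -> R) (l : R) : Prop :=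
  (forall b, inhabited (Riemann_integrable f 0 b)) /\
  forall eps, eps > 0 -> exists M, forall b (pr : Riemann_integrable f 0 b),
    M <= b -> Rabs (RiemannInt pr - l) < eps.

Definition rhs_integrand (f : R -> R) (y : R) : R :=
  (f (y + sqrt (y ^ 2 + 1)) + f (y - sqrt (y ^ 2 + 1)))
  + (f (y + sqrt (y ^ 2 + 1)) - f (y - sqrt (y ^ 2 + 1)))
    * (y / sqrt (y ^ 2 + 1)).

(* Main.v *)
Require Import Defs.
From Stdlib Require Import Reals Lra Lia List Classical FunctionalExtensionality IndefiniteDescription.
Open Scope R_scope.

Fixpoint pdiv (z:R) (p:list R) : list R :=
  match p with
  | nil => nil
  | a :: l => match l with nil => nil | _ => peval l z :: pdiv z l end
  end.

Lemma peval_cons a l x : peval (a :: l) x = a + x * peval l x.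
Proof. reflexivity. Qed.

Lemma peval_div z p x : peval p x = peval p z + (x - z) * peval (pdiv z p) x.
Proof.
  induction p as [|a l IH].
  - simpl. ring.
  - destruct l as [|b l'].
    + simpl. ring.
    + change (pdiv z (a :: b :: l')) with (peval (b::l') z :: pdiv z (b :: l')).
      rewrite !peval_cons. rewrite IH at 1. rewrite (peval_cons _ _ z). ring.
Qed.

Lemma pdiv_length z p : length (pdiv z p) = pred (length p).
Proof.
  induction p as [|a l IH]; [reflexivity|].
  destruct l as [|b l']; [reflexivity|].
  change (pdiv z (a :: b :: l')) with (peval (b::l') z :: pdiv z (b :: l')).
  simpl length. simpl in IH. rewrite IH. reflexivity.
Qed.

Lemma pdiv_zero z p : peval p z = 0 -> (forall c, In c (pdiv z p) -> c = 0) ->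
  forall c, In c p -> c = 0.
Proof.
  induction p as [|a l IH]; [simpl; tauto|].
  destruct l as [|b l'].
  - simpl. intros H _ c [Hc|[]]. subst. lra.
  - change (pdiv z (a :: b :: l')) with (peval (b::l') z :: pdiv z (b :: l')).
    intros H0 H1.
    assert (Hb : peval (b :: l') z = 0) by (apply H1; left; reflexivity).
    assert (IH' : forall c, In c (b :: l') -> c = 0).
    { apply IH; [exact Hb|]. intros c Hc. apply H1. right. exact Hc. }
    rewrite peval_cons, Hb in H0.
    intros c [Hc|Hc]; [subst; lra| apply IH'; exact Hc].
Qed.

Lemma pdiv_nonzero z q : peval q z = 0 -> nonzero_poly q -> nonzero_poly (pdiv z q).
Proof.
  intros H [c [Hc Hc0]]. apply NNPP. intro Hn. apply Hc0.
  apply (pdiv_zero z q H); [|exact Hc].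
  intros d Hd. apply NNPP. intro Hd0. apply Hn. exists d. auto.
Qed.

Lemma roots_finite_aux n : forall q, (length q <= n)%nat -> nonzero_poly q ->
  exists L, forall x, peval q x = 0 -> In x L.
Proof.
  induction n as [|n IH]; intros q Hl Hq.
  - destruct q; [destruct Hq as [c [[] _]] | simpl in Hl; lia].
  - destruct (classic (exists z, peval q z = 0)) as [[z Hz]|Hn].
    + destruct (IH (pdiv z q)) as [L HL].
      * rewrite pdiv_length. lia.
      * apply pdiv_nonzero; assumption.
      * exists (z :: L). intros x Hx. rewrite (peval_div z) in Hx. rewrite Hz in Hx.
        destruct (Rmult_integral (x - z) (peval (pdiv z q) x)) as [H|H]; [lra| |].
        -- left. lra.
        -- right. apply HL. exact H.
    + exists nil. intros x Hx. exfalso. apply Hn. exists x. exact Hx.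
Qed.

Lemma roots_finite q : nonzero_poly q -> exists L, forall x, peval q x = 0 -> In x L.
Proof. intros. apply (roots_finite_aux (length q)); auto. Qed.

Lemma peval_cont p : continuity (peval p).
Proof.
  induction p as [|a l IH]; intro x.
  - apply continuity_pt_const. intros u v. reflexivity.
  - change (continuity_pt (plus_fct (fct_cte a) (mult_fct id (peval l))) x).
    apply continuity_pt_plus.
    + apply continuity_pt_const. intros u v. reflexivity.
    + apply continuity_pt_mult; [apply derivable_continuous_pt, derivable_pt_id | apply IH].
Qed.

Lemma avoid L : forall a b, a < b -> exists y, a < y < b /\ ~ In y L.
Proof.
  induction L as [|c L IH]; intros a b Hab.
  - exists ((a+b)/2). split; [lra| simpl; tauto].
  - destruct (IH a b Hab) as [y [Hy Hn]].
    destruct (Req_dec y c) as [->|Hyc].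
    + destruct (IH a c (proj1 Hy)) as [y' [Hy' Hn']].
      exists y'. split; [lra|]. intros [H|H]; [lra|tauto].
    + exists y. split; [exact Hy|]. intros [H|H]; [congruence|tauto].
Qed.

Lemma isolate L x0 : exists r, r > 0 /\ forall y, y <> x0 -> Rabs (y - x0) < r -> ~ In y L.
Proof.
  induction L as [|c L IH].
  - exists 1. split; [lra| simpl; tauto].
  - destruct IH as [r [Hr H]].
    destruct (Req_dec c x0) as [->|Hc].
    + exists r. split; [exact Hr|]. intros y Hy Hd [Hi|Hi]; [congruence| apply (H y); auto].
    + exists (Rmin r (Rabs (c - x0))). split.
      * apply Rmin_pos; [exact Hr| apply Rabs_pos_lt; lra].
      * intros y Hy Hd [Hi|Hi].
        -- subst. pose proof (Rmin_r r (Rabs (y - x0))). lra.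
        -- apply (H y); auto. pose proof (Rmin_l r (Rabs (c - x0))). lra.
Qed.

Lemma cont_eps F x : continuity_pt F x -> forall eps, eps > 0 ->
  exists d, d > 0 /\ forall y, Rabs (y - x) < d -> Rabs (F y - F x) < eps.
Proof.
  intros H eps He. destruct (H eps He) as [d [Hd Hy]].
  exists d. split; [exact Hd|]. intros y Hyd.
  destruct (Req_dec y x) as [->|Hn].
  - rewrite Rminus_diag, Rabs_R0. exact He.
  - apply (Hy y). split; [split; [exact I| auto] | exact Hyd].
Qed.

Lemma ratlim_aux n : forall q p z, (length q <= n)%nat -> nonzero_poly q ->
 (exists M d, d > 0 /\ forall y, y <> z -> Rabs (y - z) < d -> peval q y <> 0 ->
      Rabs (peval p y / peval q y) <= M) ->
 exists c, forall eps, eps > 0 -> exists d, d > 0 /\ forall y, y <> z ->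
      Rabs (y - z) < d -> peval q y <> 0 -> Rabs (peval p y / peval q y - c) < eps.
Proof.
  induction n as [|n IH]; intros q p z Hl Hq Hb.
  - destruct q; [destruct Hq as [c [[] _]] | simpl in Hl; lia].
  - destruct (Req_dec (peval q z) 0) as [Hqz|Hqz].
    + destruct (Req_dec (peval p z) 0) as [Hpz|Hpz].
      * destruct (IH (pdiv z q) (pdiv z p) z) as [c Hc].
        -- rewrite pdiv_length. lia.
        -- apply pdiv_nonzero; assumption.
        -- destruct Hb as [M [d [Hd HM]]]. exists M, d. split; [exact Hd|].
           intros y Hy Hyd Hqy.
           assert (Hq' : peval q y = (y - z) * peval (pdiv z q) y)
             by (rewrite (peval_div z q y), Hqz; ring).
           assert (Hp' : peval p y = (y - z) * peval (pdiv z p) y)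
             by (rewrite (peval_div z p y), Hpz; ring).
           assert (Hyz : y - z <> 0) by lra.
           assert (Hqy' : peval q y <> 0) by (rewrite Hq'; apply Rmult_integral_contrapositive; tauto).
           replace (peval (pdiv z p) y / peval (pdiv z q) y) with (peval p y / peval q y).
           ++ apply HM; auto.
           ++ rewrite Hq', Hp'. field. split; auto.
        -- exists c. intros eps He. destruct (Hc eps He) as [d [Hd H]].
           exists d. split; [exact Hd|]. intros y Hy Hyd Hqy.
           assert (Hq' : peval q y = (y - z) * peval (pdiv z q) y)
             by (rewrite (peval_div z q y), Hqz; ring).
           assert (Hp' : peval p y = (y - z) * peval (pdiv z p) y)
             by (rewrite (peval_div z p y), Hpz; ring).
           assert (Hyz : y - z <> 0) by lra.
           assert (Hqy' : peval (pdiv z q) y <> 0).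
           { intro E. apply Hqy. rewrite Hq', E. ring. }
           replace (peval p y / peval q y) with (peval (pdiv z p) y / peval (pdiv z q) y).
           ++ apply H; auto.
           ++ rewrite Hq', Hp'. field. split; auto.
      * exfalso. destruct Hb as [M [d [Hd HM]]].
        destruct (roots_finite q Hq) as [L HL].
        set (A := Rabs (peval p z)).
        assert (HA : A > 0) by (apply Rabs_pos_lt; exact Hpz).
        set (K := Rabs M + 1).
        assert (HK : K > 0) by (unfold K; pose proof (Rabs_pos M); lra).
        destruct (cont_eps _ _ (peval_cont p z) (A/2)) as [d1 [Hd1 H1]]; [lra|].
        destruct (cont_eps _ _ (peval_cont q z) (A/(2*K))) as [d2 [Hd2 H2]].
        { apply Rdiv_lt_0_compat; lra. }
        set (m := Rmin d (Rmin d1 d2)).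
        assert (Hm : m > 0) by (unfold m; repeat apply Rmin_pos; lra).
        assert (Hm1 : m <= d) by apply Rmin_l.
        assert (Hm2 : m <= d1) by (unfold m; eapply Rle_trans; [apply Rmin_r| apply Rmin_l]).
        assert (Hm3 : m <= d2) by (unfold m; eapply Rle_trans; [apply Rmin_r| apply Rmin_r]).
        destruct (avoid L z (z + m)) as [y [Hy Hny]]; [lra|].
        assert (Hqy : peval q y <> 0) by (intro E; apply Hny, HL, E).
        assert (Hyd : Rabs (y - z) < m) by (rewrite Rabs_right; lra).
        specialize (HM y ltac:(lra) ltac:(lra) Hqy).
        specialize (H1 y ltac:(lra)). specialize (H2 y ltac:(lra)).
        rewrite Hqz, Rminus_0_r in H2.
        assert (Hpy : Rabs (peval p y) > A/2).
        { pose proof (Rabs_triang_inv (peval p z) (peval p y)).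
          rewrite Rabs_minus_sym in H1. fold A in H. lra. }
        assert (Hqpos : Rabs (peval q y) > 0) by (apply Rabs_pos_lt; exact Hqy).
        unfold Rdiv in HM; rewrite Rabs_mult, Rabs_inv in HM.
        assert (Hprod : K * Rabs (peval q y) < A/2).
        { apply (Rmult_lt_compat_l K) in H2; [|exact HK].
          replace (K * (A / (2 * K))) with (A/2) in H2 by (field; lra). exact H2. }
        assert (Hk : K * Rabs (peval q y) < Rabs (peval p y)) by lra.
        assert (Rabs (peval p y) / Rabs (peval q y) > K).
        { apply Rmult_gt_reg_r with (Rabs (peval q y)); [exact Hqpos|].
          unfold Rdiv. rewrite Rmult_assoc, Rinv_l by lra. lra. }
        pose proof (Rle_abs M). unfold K in *. lra.
    + exists (peval p z / peval q z). intros eps He.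
      assert (Hc : continuity_pt (fun y => peval p y / peval q y) z).
      { change (continuity_pt (div_fct (peval p) (peval q)) z).
        apply continuity_pt_div; [apply peval_cont|apply peval_cont|exact Hqz]. }
      destruct (cont_eps _ _ Hc eps He) as [d [Hd H]].
      exists d. split; [exact Hd|]. intros y _ Hy _. apply H. exact Hy.
Qed.

Definition plim (f : R -> R) (x0 c : R) : Prop :=
  forall eps, eps > 0 -> exists d, d > 0 /\ forall y, y <> x0 -> Rabs (y - x0) < d ->
    Rabs (f y - c) < eps.

Lemma plim_unique f x c1 c2 : plim f x c1 -> plim f x c2 -> c1 = c2.
Proof.
  intros H1 H2. apply NNPP. intro Hn.
  assert (He : Rabs (c1 - c2) / 2 > 0) by (apply Rdiv_lt_0_compat; [apply Rabs_pos_lt; lra| lra]).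
  destruct (H1 _ He) as [d1 [Hd1 K1]]. destruct (H2 _ He) as [d2 [Hd2 K2]].
  set (y := x + Rmin d1 d2 / 2).
  assert (Hm : Rmin d1 d2 > 0) by (apply Rmin_pos; lra).
  assert (Hy : y <> x) by (unfold y; lra).
  assert (Hyd : Rabs (y - x) = Rmin d1 d2 / 2) by (unfold y; rewrite Rabs_right; lra).
  pose proof (Rmin_l d1 d2). pose proof (Rmin_r d1 d2).
  specialize (K1 y Hy ltac:(lra)). specialize (K2 y Hy ltac:(lra)).
  pose proof (Rabs_triang (c1 - f y) (f y - c2)) as T.
  replace (c1 - f y + (f y - c2)) with (c1 - c2) in T by ring.
  rewrite Rabs_minus_sym in K1. lra.
Qed.

Lemma le_eps a b : (forall e, e > 0 -> a < b + e) -> a <= b.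
Proof.
  intros H. destruct (Rle_lt_dec a b) as [h|h]; [exact h|].
  specialize (H ((a - b)/2) ltac:(lra)). lra.
Qed.

Lemma plim_cont f g : (forall x, plim f x (g x)) -> continuity g.
Proof.
  intros H x0 eps He.
  destruct (H x0 (eps/2) ltac:(lra)) as [d [Hd K]].
  exists d. split; [exact Hd|]. intros y [[_ Hy] Hyd]. simpl in *. unfold R_dist in *.
  assert (Hle : Rabs (g y - g x0) <= eps/2).
  { apply le_eps. intros e He'.
    destruct (H y e He') as [d' [Hd' K']].
    set (m := Rmin d' (d - Rabs (y - x0))).
    assert (Hm : m > 0) by (unfold m; apply Rmin_pos; lra).
    destruct (avoid (y :: x0 :: nil) y (y + m)) as [w [Hw Hnw]]; [lra|].
    assert (Hwy : w <> y) by (intro E; apply Hnw; left; auto).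
    assert (Hwx : w <> x0) by (intro E; apply Hnw; right; left; auto).
    assert (Hwyd : Rabs (w - y) < m) by (rewrite Rabs_right; lra).
    pose proof (Rmin_l d' (d - Rabs (y - x0))) as R1. pose proof (Rmin_r d' (d - Rabs (y - x0))) as R2.
    fold m in R1, R2.
    specialize (K' w Hwy ltac:(lra)).
    assert (Hwx0 : Rabs (w - x0) < d).
    { pose proof (Rabs_triang (w - y) (y - x0)) as T.
      replace (w - y + (y - x0)) with (w - x0) in T by ring. lra. }
    specialize (K w Hwx Hwx0).
    pose proof (Rabs_triang (g y - f w) (f w - g x0)) as T.
    replace (g y - f w + (f w - g x0)) with (g y - g x0) in T by ring.
    rewrite Rabs_minus_sym in K'. lra. }
  lra.
Qed.

Lemma sf_bound l : forall f a b lf, a <= b -> adapted_couple f a b l lf ->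
  exists M, forall t, a <= t <= b -> Rabs (f t) <= M.
Proof.
  induction l as [|r1 l IH]; intros f a b lf Hab H.
  - destruct H as [_ [_ [_ [H _]]]]. simpl in H. discriminate.
  - destruct l as [|r2 l].
    + destruct H as [_ [H0 [H1 _]]]. simpl in H0, H1.
      rewrite Rmin_left in H0 by lra. rewrite Rmax_right in H1 by lra.
      exists (Rabs (f a)). intros t Ht. replace t with a by lra. lra.
    + destruct lf as [|r3 lf].
      { destruct H as [_ [_ [_ [H _]]]]. simpl in H. discriminate. }
      pose proof (StepFun_P7 Hab H) as H7.
      assert (Hr2 : r2 <= b).
      { destruct (Rle_dec r2 b) as [h|h]; [exact h|].
        destruct H7 as [_ [H0 _]]. simpl in H0. rewrite Rmin_right in H0 by lra. lra. }
      destruct (IH f r2 b lf Hr2 H7) as [M HM].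
      destruct H as [_ [H0 [_ [_ Hc]]]]. simpl in H0. rewrite Rmin_left in H0 by lra.
      exists (Rmax (Rabs (f a)) (Rmax (Rabs r3) M)). intros t Ht.
      destruct (Req_dec t a) as [->|Hta]; [apply Rmax_l|].
      destruct (Rlt_le_dec t r2) as [h|h].
      * assert (E : f t = r3).
        { apply (Hc 0%nat); [simpl; lia|]. unfold open_interval. simpl. lra. }
        rewrite E. eapply Rle_trans; [|apply Rmax_r]. apply Rmax_l.
      * eapply Rle_trans; [|apply Rmax_r]. eapply Rle_trans; [|apply Rmax_r].
        apply HM. lra.
Qed.

Lemma int_bound f a b : a <= b -> Riemann_integrable f a b ->
  exists M, forall t, a <= t <= b -> Rabs (f t) <= M.
Proof.
  intros Hab pr.
  destruct (pr (mkposreal 1 Rlt_0_1)) as [phi [psi [H _]]].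
  destruct (sf_bound _ _ _ _ _ Hab (StepFun_P1 phi)) as [M1 HM1].
  destruct (sf_bound _ _ _ _ _ Hab (StepFun_P1 psi)) as [M2 HM2].
  exists (M1 + M2). intros t Ht.
  rewrite Rmin_left in H by exact Hab. rewrite Rmax_right in H by exact Hab.
  specialize (H t Ht). specialize (HM1 t Ht). specialize (HM2 t Ht).
  pose proof (Rabs_triang (f t - phi t) (phi t)).
  replace (f t - phi t + phi t) with (f t) in H0 by ring.
  pose proof (Rle_abs (psi t)). lra.
Qed.

Lemma d_stepfun d a b c : a <= b -> (forall x, x <> c -> d x = 0) -> IsStepFun d a b.
Proof.
  intros Hab Hd.
  destruct (Rlt_dec a c) as [h1|h1]; [destruct (Rlt_dec c b) as [h2|h2]|].
  - exists (a :: c :: b :: nil). exists (0 :: 0 :: nil).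
    repeat split.
    + intros i Hi. simpl in Hi. destruct i as [|[|i]]; simpl; lra || lia.
    + simpl. rewrite Rmin_left; lra.
    + simpl. rewrite Rmax_right; lra.
    + intros i Hi x Hx. unfold open_interval in Hx. simpl in Hi.
      destruct i as [|[|i]]; simpl in *; [apply Hd; lra| apply Hd; lra| lia].
  - exists (a :: b :: nil). exists (0 :: nil).
    repeat split.
    + intros i Hi. simpl in Hi. destruct i as [|i]; simpl; lra || lia.
    + simpl. rewrite Rmin_left; lra.
    + simpl. rewrite Rmax_right; lra.
    + intros i Hi x Hx. unfold open_interval in Hx. simpl in Hi.
      destruct i as [|i]; simpl in *; [apply Hd; lra| lia].
  - exists (a :: b :: nil). exists (0 :: nil).
    repeat split.
    + intros i Hi. simpl in Hi. destruct i as [|i]; simpl; lra || lia.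
    + simpl. rewrite Rmin_left; lra.
    + simpl. rewrite Rmax_right; lra.
    + intros i Hi x Hx. unfold open_interval in Hx. simpl in Hi.
      destruct i as [|i]; simpl in *; [apply Hd; lra| lia].
Qed.

Lemma d_int d a b c : a <= b -> (forall x, x <> c -> d x = 0) -> Riemann_integrable d a b.
Proof.
  intros Hab Hd eps.
  exists (mkStepFun (d_stepfun d a b c Hab Hd)).
  exists (mkStepFun (StepFun_P4 a b 0)).
  split.
  - intros t _. simpl. rewrite Rminus_diag, Rabs_R0. unfold fct_cte. lra.
  - rewrite StepFun_P18. rewrite Rmult_0_l, Rabs_R0. apply cond_pos.
Qed.

Lemma sp_mod h k c a b : (forall x, x <> c -> k x = h x) ->
  Riemann_integrable h a b -> Riemann_integrable k a b.
Proof.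
  intros Hk pr.
  assert (Gen : forall a b, a <= b -> Riemann_integrable h a b -> Riemann_integrable k a b).
  { clear a b pr. intros a b Hab pr.
    assert (pd : Riemann_integrable (fun x => k x - h x) a b).
    { apply (d_int _ a b c Hab). intros x Hx. rewrite Hk by exact Hx. ring. }
    apply (Riemann_integrable_ext (f := fun x => h x + 1 * (k x - h x))).
    - intros; ring.
    - apply RiemannInt_P10; assumption. }
  destruct (Rle_dec a b) as [h1|h1].
  - apply Gen; assumption.
  - apply RiemannInt_P1. apply Gen; [lra|]. apply RiemannInt_P1. exact pr.
Qed.

Lemma sp_eq_le h k c a b (pr1 : Riemann_integrable h a b) (pr2 : Riemann_integrable k a b) :
  (forall x, x <> c -> k x = h x) -> a <= b -> RiemannInt pr1 = RiemannInt pr2.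
Proof.
  intros Hk Hab.
  destruct (Rlt_dec a c) as [h1|h1]; [destruct (Rlt_dec c b) as [h2|h2]|].
  - pose proof (RiemannInt_P22 pr1 (conj (Rlt_le _ _ h1) (Rlt_le _ _ h2))) as p1.
    pose proof (RiemannInt_P23 pr1 (conj (Rlt_le _ _ h1) (Rlt_le _ _ h2))) as p2.
    pose proof (RiemannInt_P22 pr2 (conj (Rlt_le _ _ h1) (Rlt_le _ _ h2))) as q1.
    pose proof (RiemannInt_P23 pr2 (conj (Rlt_le _ _ h1) (Rlt_le _ _ h2))) as q2.
    rewrite <- (RiemannInt_P26 p1 p2 pr1), <- (RiemannInt_P26 q1 q2 pr2).
    f_equal; apply RiemannInt_P18; try lra; intros x Hx; symmetry; apply Hk; lra.
  - apply RiemannInt_P18; [exact Hab|]. intros x Hx; symmetry; apply Hk; lra.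
  - apply RiemannInt_P18; [exact Hab|]. intros x Hx; symmetry; apply Hk; lra.
Qed.

Lemma sp_eq h k c a b (pr1 : Riemann_integrable h a b) (pr2 : Riemann_integrable k a b) :
  (forall x, x <> c -> k x = h x) -> RiemannInt pr1 = RiemannInt pr2.
Proof.
  intros Hk. destruct (Rle_dec a b) as [h1|h1].
  - apply (sp_eq_le _ _ c); assumption.
  - rewrite (RiemannInt_P8 pr1 (RiemannInt_P1 pr1)), (RiemannInt_P8 pr2 (RiemannInt_P1 pr2)).
    f_equal. apply (sp_eq_le _ _ c); [assumption|lra].
Qed.

Lemma fm L : forall h k a b, (forall x, ~ In x L -> k x = h x) ->
  inhabited (Riemann_integrable h a b) ->
  inhabited (Riemann_integrable k a b) /\
  forall (pr1 : Riemann_integrable h a b) (pr2 : Riemann_integrable k a b),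
    RiemannInt pr1 = RiemannInt pr2.
Proof.
  induction L as [|c L IH]; intros h k a b Hk [pr].
  - assert (E : k = h) by (apply functional_extensionality; intro x; apply Hk; simpl; tauto).
    subst. split; [constructor; exact pr|]. intros; apply RiemannInt_P5.
  - set (k' := fun x => if Req_EM_T x c then h x else k x).
    assert (Hk' : forall x, ~ In x L -> k' x = h x).
    { intros x Hx. unfold k'. destruct (Req_EM_T x c) as [e|e]; [reflexivity|].
      apply Hk. intros [E|E]; [congruence|tauto]. }
    destruct (IH h k' a b Hk' (inhabits pr)) as [[pr'] Heq].
    assert (Hkk : forall x, x <> c -> k x = k' x).
    { intros x Hx. unfold k'. destruct (Req_EM_T x c); [congruence|reflexivity]. }
    split.
    + constructor. exact (sp_mod _ _ c _ _ Hkk pr').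
    + intros pr1 pr2. rewrite (Heq pr1 pr'). apply (sp_eq _ _ c). exact Hkk.
Qed.

Definition prg (g : R -> R) (cg : continuity g) (a b : R) : Riemann_integrable g a b :=
  match Rle_dec a b with
  | left h => continuity_implies_RiemannInt h (fun x _ => cg x)
  | right h => RiemannInt_P1 (continuity_implies_RiemannInt
                  (Rlt_le _ _ (Rnot_le_lt _ _ h)) (fun x _ => cg x))
  end.

Definition Gp g cg t := RiemannInt (prg g cg 0 t).

Lemma Gp_diff g cg a b (pr : Riemann_integrable g a b) :
  RiemannInt pr = Gp g cg b - Gp g cg a.
Proof.
  unfold Gp. rewrite <- (RiemannInt_P26 (prg g cg 0 a) pr (prg g cg 0 b)). ring.
Qed.

Lemma Gp0 g cg : Gp g cg 0 = 0.
Proof. unfold Gp. apply RiemannInt_P9. Qed.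

Lemma der_loc F1 F2 x l r : r > 0 -> (forall t, Rabs (t - x) < r -> F1 t = F2 t) ->
  derivable_pt_lim F1 x l -> derivable_pt_lim F2 x l.
Proof.
  intros Hr HF H eps He. destruct (H eps He) as [del Hd].
  assert (Hm : 0 < Rmin del r) by (apply Rmin_pos; [apply cond_pos|lra]).
  exists (mkposreal _ Hm). intros h Hh Hhd. simpl in Hhd.
  pose proof (Rmin_l del r). pose proof (Rmin_r del r).
  rewrite <- !HF.
  - apply Hd; [exact Hh| lra].
  - rewrite Rminus_diag, Rabs_R0. lra.
  - replace (x + h - x) with h by ring. lra.
Qed.

Lemma Gp_der g cg x : derivable_pt_lim (Gp g cg) x (g x).
Proof.
  assert (h : x - 1 <= x + 1) by lra.
  pose proof (RiemannInt_P28 (f:=g) (x:=x) h (fun y _ => cg y) ltac:(lra)) as D.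
  set (P := primitive h (FTC_P1 h (fun (y : R) (_ : x - 1 <= y <= x + 1) => cg y))) in D.
  apply (der_loc (fun t => Gp g cg (x - 1) + P t) _ x _ 1); [lra| |].
  - intros t Ht. unfold P, primitive.
    destruct (Rle_dec (x - 1) t) as [h1|h1]; [|exfalso; apply Rabs_def2 in Ht; lra].
    destruct (Rle_dec t (x + 1)) as [h2|h2]; [|exfalso; apply Rabs_def2 in Ht; lra].
    rewrite Gp_diff with (cg := cg). ring.
  - replace (g x) with (0 + g x) by ring.
    apply (derivable_pt_lim_plus (fct_cte (Gp g cg (x - 1))) P).
    + apply derivable_pt_lim_const.
    + exact D.
Qed.

Lemma FTC_gen (H h : R -> R) (a b : R) (dH : forall x, derivable_pt_lim H x (h x))
  (ch : continuity h) (pr : Riemann_integrable h a b) : RiemannInt pr = H b - H a.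
Proof.
  set (d := fun x => exist (fun l => derivable_pt_abs H x l) (h x) (dH x) : derivable_pt H x).
  exact (FTC_Riemann {| c1 := H; diff0 := d; cont1 := ch |} pr).
Qed.

Definition sq y := sqrt (y ^ 2 + 1).
Lemma sq_pos y : 0 < sq y.
Proof. unfold sq. apply sqrt_lt_R0. pose proof (pow2_ge_0 y). lra. Qed.
Lemma sq_sq y : sq y * sq y = y ^ 2 + 1.
Proof. unfold sq. apply sqrt_sqrt. pose proof (pow2_ge_0 y). lra. Qed.
Lemma sq_gt y : y < sq y /\ - y < sq y.
Proof. pose proof (sq_pos y). pose proof (sq_sq y). split; nra. Qed.

Lemma sq_der y : derivable_pt_lim sq y (y / sq y).
Proof.
  assert (D1 : derivable_pt_lim (fun y => y ^ 2 + 1) y (2 * y)).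
  { replace (2 * y) with (INR 2 * y ^ (pred 2) + 0) by (simpl; ring).
    apply (derivable_pt_lim_plus (fun y => y ^ 2) (fct_cte 1)).
    - apply derivable_pt_lim_pow.
    - apply derivable_pt_lim_const. }
  assert (D2 : derivable_pt_lim sqrt (y ^ 2 + 1) (/ (2 * sqrt (y ^ 2 + 1)))).
  { apply derivable_pt_lim_sqrt. pose proof (pow2_ge_0 y). lra. }
  pose proof (derivable_pt_lim_comp _ _ _ _ _ D1 D2) as D.
  replace (y / sq y) with (/ (2 * sqrt (y ^ 2 + 1)) * (2 * y)).
  - exact D.
  - pose proof (sq_pos y). unfold sq in *. field. lra.
Qed.

Definition uu y := y + sq y.
Definition vv y := y - sq y.

Lemma uu_der y : derivable_pt_lim uu y (1 + y / sq y).
Proof. apply (derivable_pt_lim_plus id sq); [apply derivable_pt_lim_id| apply sq_der]. Qed.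
Lemma vv_der y : derivable_pt_lim vv y (1 - y / sq y).
Proof. apply (derivable_pt_lim_minus id sq); [apply derivable_pt_lim_id| apply sq_der]. Qed.

Definition HH g cg y := Gp g cg (uu y) + Gp g cg (vv y).

Lemma rhs_eq g y : rhs_integrand g y =
  g (uu y) * (1 + y / sq y) + g (vv y) * (1 - y / sq y).
Proof. unfold rhs_integrand, uu, vv, sq. ring. Qed.

Lemma HH_der g cg y : derivable_pt_lim (HH g cg) y (rhs_integrand g y).
Proof.
  rewrite rhs_eq.
  apply (derivable_pt_lim_plus (comp (Gp g cg) uu) (comp (Gp g cg) vv)).
  - apply derivable_pt_lim_comp; [apply uu_der| apply Gp_der].
  - apply derivable_pt_lim_comp; [apply vv_der| apply Gp_der].
Qed.

Lemma dcont F x l : derivable_pt_lim F x l -> continuity_pt F x.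
Proof. intro D. apply derivable_continuous_pt. exists l. exact D. Qed.

Lemma rhs_cont g (cg : continuity g) : continuity (rhs_integrand g).
Proof.
  intro y.
  assert (E : rhs_integrand g = plus_fct (mult_fct (comp g uu) (fun y => 1 + y / sq y))
                                      (mult_fct (comp g vv) (fun y => 1 - y / sq y))).
  { apply functional_extensionality. intro t. rewrite rhs_eq. reflexivity. }
  assert (Cq : continuity_pt (fun y => y / sq y) y).
  { change (continuity_pt (div_fct id sq) y). apply continuity_pt_div.
    - apply derivable_continuous_pt, derivable_pt_id.
    - apply (dcont _ _ _ (sq_der y)).
    - pose proof (sq_pos y). lra. }
  rewrite E. apply continuity_pt_plus; apply continuity_pt_mult.
  - apply continuity_pt_comp; [apply (dcont _ _ _ (uu_der y))| apply cg].
  - change (continuity_pt (plus_fct (fct_cte 1) (fun y => y / sq y)) y).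
    apply continuity_pt_plus; [apply continuity_pt_const; intros ? ?; reflexivity| exact Cq].
  - apply continuity_pt_comp; [apply (dcont _ _ _ (vv_der y))| apply cg].
  - change (continuity_pt (minus_fct (fct_cte 1) (fun y => y / sq y)) y).
    apply continuity_pt_minus; [apply continuity_pt_const; intros ? ?; reflexivity| exact Cq].
Qed.

Lemma uv_facts y : uu y > y /\ vv y < y /\ uu y > 0 /\ vv y < 0 /\ uu y * vv y = -1.
Proof.
  pose proof (sq_pos y). pose proof (sq_sq y). pose proof (sq_gt y).
  unfold uu, vv. repeat split; try lra.
Qed.

Lemma uv_inv y r : (r = uu y \/ r = vv y) -> y = (r * r - 1) / (2 * r).
Proof.
  intros Hr. pose proof (sq_sq y). pose proof (uv_facts y).
  assert (Hr0 : r <> 0) by (destruct Hr; subst; lra).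
  assert (E : r * r - 1 = y * (2 * r)).
  { destruct Hr; subst; unfold uu, vv in *; nra. }
  rewrite E. field. exact Hr0.
Qed.

Lemma local_lim f p q L (Hf : forall x, peval q x <> 0 -> f x = peval p x / peval q x)
  (Hq : nonzero_poly q) (HL : forall x, peval q x = 0 -> In x L)
  (Hint : forall a b, inhabited (Riemann_integrable f a b)) x :
  exists c, plim f x c /\ (peval q x <> 0 -> c = f x).
Proof.
  destruct (Hint (x - 1) (x + 1)) as [pr].
  destruct (int_bound f (x-1) (x+1) ltac:(lra) pr) as [M HM].
  destruct (isolate L x) as [r [Hr Hiso]].
  assert (Hnz : forall y, y <> x -> Rabs (y - x) < r -> peval q y <> 0).
  { intros y H1 H2 E. apply (Hiso y H1 H2). apply HL. exact E. }
  destruct (Req_dec (peval q x) 0) as [Hqx|Hqx].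
  - destruct (ratlim_aux (length q) q p x (le_n _) Hq) as [c Hc].
    + exists M, 1. split; [lra|]. intros y Hy Hyd Hqy. rewrite <- Hf by exact Hqy.
      apply HM. apply Rabs_def2 in Hyd. lra.
    + exists c. split; [|tauto]. intros eps He. destruct (Hc eps He) as [d [Hd H]].
      exists (Rmin d r). split; [apply Rmin_pos; lra|]. intros y Hy Hyd.
      pose proof (Rmin_l d r). pose proof (Rmin_r d r).
      assert (Hqy : peval q y <> 0) by (apply Hnz; auto; lra).
      rewrite Hf by exact Hqy. apply H; auto. lra.
  - exists (f x). split; [|auto]. intros eps He.
    assert (Hc : continuity_pt (fun y => peval p y / peval q y) x).
    { change (continuity_pt (div_fct (peval p) (peval q)) x).
      apply continuity_pt_div; [apply peval_cont|apply peval_cont|exact Hqx]. }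
    destruct (cont_eps _ _ Hc eps He) as [d [Hd H]].
    exists (Rmin d r). split; [apply Rmin_pos; lra|]. intros y Hy Hyd.
    pose proof (Rmin_l d r). pose proof (Rmin_r d r).
    assert (Hqy : peval q y <> 0) by (apply Hnz; auto; lra).
    rewrite (Hf y Hqy), (Hf x Hqx). apply H. lra.
Qed.

Theorem mainTheorem3 (f : R -> R) :
  is_rational_fun f ->
  (exists l, improper_int_R f l) ->
  (exists l, improper_int_R (fun x => Rabs (f x)) l) ->
  (exists I, improper_int_R f I /\ improper_int_R (rhs_integrand f) I) /\
  ((forall x, f (- x) = f x) ->
   exists I, improper_int_pos f I /\ improper_int_pos (rhs_integrand f) I).
Proof.
  intros [p [q [Hq Hf]]] [l [Hint Hlim]] _.
  destruct (roots_finite q Hq) as [L HL].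
  assert (Hch : forall x, {c | plim f x c /\ (peval q x <> 0 -> c = f x)}).
  { intro x. apply constructive_indefinite_description.
    apply (local_lim f p q L Hf Hq HL Hint x). }
  set (g := fun x => proj1_sig (Hch x)).
  assert (Hg : forall x, plim f x (g x)) by (intro x; exact (proj1 (proj2_sig (Hch x)))).
  assert (Hfg : forall x, ~ In x L -> f x = g x).
  { intros x Hx. symmetry. apply (proj2 (proj2_sig (Hch x))). intro E. apply Hx, HL, E. }
  pose proof (plim_cont f g Hg) as cg.
  set (G := Gp g cg).
  assert (Fint : forall a b (pr : Riemann_integrable f a b), RiemannInt pr = G b - G a).
  { intros a b pr. destruct (fm L g f a b Hfg (inhabits (prg g cg a b))) as [_ E].
    rewrite <- (E (prg g cg a b) pr). apply Gp_diff. }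
  assert (Hlim' : forall eps, eps > 0 -> exists M, forall a b, a <= - M -> M <= b ->
            Rabs (G b - G a - l) < eps).
  { intros eps He. destruct (Hlim eps He) as [M HM]. exists M. intros a b H1 H2.
    destruct (Hint a b) as [pr]. rewrite <- Fint with (pr := pr). apply HM; assumption. }
  set (L' := map (fun r => (r * r - 1) / (2 * r)) L).
  assert (Hrhs : forall x, ~ In x L' -> rhs_integrand f x = rhs_integrand g x).
  { intros x Hx.
    assert (Hu : ~ In (uu x) L).
    { intro Hi. apply Hx. unfold L'. rewrite (uv_inv x (uu x)) at 1 by auto.
      apply (in_map (fun r => (r * r - 1) / (2 * r))). exact Hi. }
    assert (Hv : ~ In (vv x) L).
    { intro Hi. apply Hx. unfold L'. rewrite (uv_inv x (vv x)) at 1 by auto.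
      apply (in_map (fun r => (r * r - 1) / (2 * r))). exact Hi. }
    rewrite !rhs_eq. rewrite (Hfg _ Hu), (Hfg _ Hv). reflexivity. }
  pose proof (rhs_cont g cg) as crhs.
  assert (Rint : forall a b, inhabited (Riemann_integrable (rhs_integrand f) a b) /\
     forall pr : Riemann_integrable (rhs_integrand f) a b,
       RiemannInt pr = HH g cg b - HH g cg a).
  { intros a b. destruct (fm L' _ _ a b Hrhs (inhabits (prg _ crhs a b))) as [I E].
    split; [exact I|]. intro pr. rewrite <- (E (prg _ crhs a b) pr).
    apply FTC_gen; [apply HH_der| exact crhs]. }
  assert (G0 : G 0 = 0) by apply Gp0.
  assert (Gc0 : forall eps, eps > 0 -> exists d, d > 0 /\ forall t, Rabs t < d -> Rabs (G t) < eps).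
  { intros eps He. destruct (cont_eps _ _ (dcont _ _ _ (Gp_der g cg 0)) eps He) as [d [Hd H]].
    exists d. split; [exact Hd|]. intros t Ht. specialize (H t). fold G in H.
    rewrite G0, !Rminus_0_r in H. apply H; exact Ht. }
  assert (Small_v : forall d b, d > 0 -> 1 / d <= b -> Rabs (vv b) < d).
  { intros d b Hd Hb. destruct (uv_facts b) as [H1 [H2 [H3 [H4 H5]]]].
    assert (Hu : d * uu b > 1).
    { assert (uu b > 1 / d) by lra.
      apply (Rmult_lt_compat_l d) in H; [|exact Hd].
      replace (d * (1 / d)) with 1 in H by (field; lra). lra. }
    rewrite Rabs_left by exact H4.
    apply (Rmult_lt_reg_r (uu b)); [exact H3|]. nra. }
  assert (Small_u : forall d a, d > 0 -> a <= - (1 / d) -> Rabs (uu a) < d).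
  { intros d a Hd Ha. destruct (uv_facts a) as [H1 [H2 [H3 [H4 H5]]]].
    assert (Hv : d * (- vv a) > 1).
    { assert (- vv a > 1 / d) by lra.
      apply (Rmult_lt_compat_l d) in H; [|exact Hd].
      replace (d * (1 / d)) with 1 in H by (field; lra). lra. }
    rewrite Rabs_right by lra.
    apply (Rmult_lt_reg_r (- vv a)); [lra|]. nra. }
  split.
  - exists l. split; [split; assumption|]. split; [intros a b; apply (proj1 (Rint a b))|].
    intros eps He.
    destruct (Hlim' (eps/2) ltac:(lra)) as [M1 HM1].
    destruct (Gc0 (eps/4) ltac:(lra)) as [d [Hd Hc]].
    exists (Rmax M1 (Rmax 0 (1/d))). intros a b pr Ha Hb.
    pose proof (Rmax_l M1 (Rmax 0 (1/d))) as R1.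
    pose proof (Rmax_r M1 (Rmax 0 (1/d))) as R2.
    pose proof (Rmax_l 0 (1/d)) as R3. pose proof (Rmax_r 0 (1/d)) as R4.
    rewrite (proj2 (Rint a b) pr). unfold HH. fold G.
    destruct (uv_facts a) as [A1 [A2 _]]. destruct (uv_facts b) as [B1 [B2 _]].
    specialize (HM1 (vv a) (uu b) ltac:(lra) ltac:(lra)).
    specialize (Hc (vv b) (Small_v d b Hd ltac:(lra))) as Hc1.
    specialize (Hc (uu a) (Small_u d a Hd ltac:(lra))) as Hc2.
    replace (G (uu b) + G (vv b) - (G (uu a) + G (vv a)) - l)
      with ((G (uu b) - G (vv a) - l) + (G (vv b) - G (uu a))) by ring.
    pose proof (Rabs_triang (G (uu b) - G (vv a) - l) (G (vv b) - G (uu a))) as T1.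
    pose proof (Rabs_triang (G (vv b)) (- G (uu a))) as T2.
    rewrite Rabs_Ropp in T2. change (G (vv b) + - G (uu a)) with (G (vv b) - G (uu a)) in T2. lra.
  - intro Hev.
    assert (gev : forall x, g (- x) = g x).
    { intro x. apply (plim_unique f x).
      - intros eps He. destruct (Hg (- x) eps He) as [d [Hd H]].
        exists d. split; [exact Hd|]. intros y Hy Hyd.
        rewrite <- (Hev y). apply H; [intro E; apply Hy; lra|].
        replace (- y - - x) with (- (y - x)) by ring. rewrite Rabs_Ropp. exact Hyd.
      - apply Hg. }
    assert (Godd : forall t, G (- t) = - G t).
    { intro t.
      assert (D : forall x, derivable_pt_lim (plus_fct G (comp G (opp_fct id))) x (fct_cte 0 x)).
      { intro x. replace (fct_cte 0 x) with (g x + g (- x) * (-1)).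
        - apply derivable_pt_lim_plus; [apply Gp_der|].
          apply derivable_pt_lim_comp; [| apply Gp_der].
          apply derivable_pt_lim_opp. apply derivable_pt_lim_id.
        - unfold fct_cte. rewrite gev. ring. }
      assert (C : continuity (fct_cte 0)) by (apply continuity_const; intros ? ?; reflexivity).
      pose proof (FTC_gen _ _ 0 t D C (RiemannInt_P14 0 t 0)) as E.
      rewrite RiemannInt_P15 in E. unfold plus_fct, comp, opp_fct, id in E.
      rewrite Ropp_0, G0 in E. lra. }
    assert (Hhalf : forall eps, eps > 0 -> exists M, M >= 0 /\ forall b, M <= b ->
              Rabs (G b - l / 2) < eps).
    { intros eps He. destruct (Hlim' eps He) as [M HM]. exists (Rmax M 0).
      split; [pose proof (Rmax_r M 0); lra|]. intros b Hb.
      pose proof (Rmax_l M 0).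
      specialize (HM (- b) b ltac:(lra) ltac:(lra)). rewrite Godd in HM.
      replace (G b - - G b - l) with (2 * (G b - l / 2)) in HM by field.
      rewrite Rabs_mult, (Rabs_right 2) in HM by lra. lra. }
    exists (l / 2). split.
    + split; [intro b; apply Hint|]. intros eps He.
      destruct (Hhalf eps He) as [M [HM0 HM]]. exists M. intros b pr Hb.
      rewrite Fint, G0, Rminus_0_r. apply HM. exact Hb.
    + split; [intro b; apply (proj1 (Rint 0 b))|]. intros eps He.
      destruct (Hhalf (eps/2) ltac:(lra)) as [M [HM0 HM]].
      destruct (Gc0 (eps/2) ltac:(lra)) as [d [Hd Hc]].
      exists (Rmax M (1/d)). intros b pr Hb.
      pose proof (Rmax_l M (1/d)). pose proof (Rmax_r M (1/d)).
      rewrite (proj2 (Rint 0 b) pr). unfold HH. fold G.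
      assert (E0 : uu 0 = 1 /\ vv 0 = -1).
      { unfold uu, vv, sq. replace (0 ^ 2 + 1) with 1 by ring. rewrite sqrt_1. split; ring. }
      destruct E0 as [-> ->].
      assert (Gm1 : G (-1) = - G 1) by (rewrite <- Godd; f_equal; ring). rewrite Gm1.
      destruct (uv_facts b) as [B1 _].
      specialize (HM (uu b) ltac:(lra)).
      specialize (Hc (vv b) (Small_v d b Hd ltac:(lra))).
      replace (G (uu b) + G (vv b) - (G 1 + - G 1) - l / 2)
        with ((G (uu b) - l / 2) + G (vv b)) by ring.
      pose proof (Rabs_triang (G (uu b) - l / 2) (G (vv b))). lra.
Qed.
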